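(* Let $K_c\subset\mathbb{E}^3$ be a cap body of a ball which is centrally symmetric. Then the illumination number of $K_c$ satisfies $I(K_c)\le 6$. Moreover this bound is sharp: there exists a centrally symmetric cap body of a ball in $\mathbb{E}^3$ whose illumination number equals $6$.
   Context: A cap body of a ball is the convex hull of a closed Euclidean ball $B^d[\boldsymbol c,r]\subset\mathbb{E}^d$ and a countable set of points $\{\boldsymbol v_i\mid i\in I\}\subset \mathbb{E}^d\setminus B^d[\boldsymbol c,r]$ such that for any two distinct $i,j\in I$ the segment $\overline{\boldsymbol v_i\boldsymbol v_j}$ intersects $B^d[\boldsymbol c,r]$. For a convex body $K$ (compact convex set with nonempty interior), a direction $\boldsymbol u\in\mathbb{S}^{d-1}$ illuminates a boundary point $\boldsymbol p$ of $K$ if $\boldsymbol p+\lambda\boldsymbol u$ lies in the interior of $K$ for some $\lambda>0$; the illumination number $I(K)$ is the smallest number of directions such that every boundary point of $K$ is illuminated by at least one of them. *)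

(* Defs.v *)
From HB Require Import structures.
From mathcomp Require Import all_boot all_order all_algebra.
From mathcomp Require Import all_classical all_reals all_analysis.
Set Implicit Arguments. Unset Strict Implicit. Unset Printing Implicit Defensive.
Import Order.TTheory GRing.Theory Num.Theory numFieldNormedType.Exports.
Local Open Scope classical_set_scope.
Local Open Scope ring_scope.

Section CapBodies.
Variable R : realType.
Notation pt := 'rV[R]_3.

Definition enorm (x : pt) : R := Num.sqrt (\sum_(i < 3) (x ord0 i) ^+ 2).
Definition eball (c : pt) (r : R) : set pt := [set x | enorm (x - c) <= r].

Definition conv_hull (S : set pt) : set pt :=
  [set x | exists (n : nat) (w : 'I_n -> R) (p : 'I_n -> pt),
      (forall i, 0 <= w i) /\ \sum_(i < n) w i = 1 /\
      (forall i, S (p i)) /\ x = \sum_(i < n) w i *: p i].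

Definition segment (v w : pt) : set pt :=
  [set x | exists t : R, 0 <= t <= 1 /\ x = (1 - t) *: v + t *: w].

Definition is_cap_body_of_ball (K : set pt) : Prop :=
  exists (c : pt) (r : R) (V : set pt),
    0 < r /\ countable V /\ V `&` eball c r = set0 /\
    (forall v w, V v -> V w -> v <> w -> segment v w `&` eball c r !=set0) /\
    K = conv_hull (eball c r `|` V).

Definition centrally_symmetric (K : set pt) : Prop :=
  exists o : pt, forall x, K x <-> K (2%:R *: o - x).

Definition boundary (K : set pt) : set pt := closure K `\` interior K.

Definition illuminates (K : set pt) (u p : pt) : Prop :=
  exists lambda : R, 0 < lambda /\ interior K (p + lambda *: u).

Definition illuminating_family (K : set pt) (D : seq pt) : Prop :=
  (forall u, u \in D -> enorm u = 1) /\
  (forall p, boundary K p -> exists2 u, u \in D & illuminates K u p).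

Definition illumination_number_le (K : set pt) (n : nat) : Prop :=
  exists D : seq pt, (size D <= n)%N /\ illuminating_family K D.

Definition illumination_number_eq (K : set pt) (n : nat) : Prop :=
  illumination_number_le K n /\
  forall m : nat, illumination_number_le K m -> (n <= m)%N.

End CapBodies.

(* Main.v *)
Require Import Defs.
From HB Require Import structures.
From mathcomp Require Import all_boot all_order all_algebra.
From mathcomp Require Import all_classical all_reals all_analysis.
From mathcomp Require Import ring lra.
Set Implicit Arguments. Unset Strict Implicit. Unset Printing Implicit Defensive.
Import Order.TTheory GRing.Theory Num.Theory numFieldNormedType.Exports.
Local Open Scope classical_set_scope.
Local Open Scope ring_scope.


Section Basics.
Variable R : realType.
Notation pt := 'rV[R]_3.

Definition i0 : 'I_3 := @Ordinal 3 0 isT.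
Definition i1 : 'I_3 := @Ordinal 3 1 isT.
Definition i2 : 'I_3 := @Ordinal 3 2 isT.

Lemma ord3 (i : 'I_3) : i = i0 \/ i = i1 \/ i = i2.
Proof.
case: i => [[|[|[|k]]] Hk]; [left|right;left|right;right|]; try by apply/val_inj.
by [].
Qed.

Lemma sum3 (f : 'I_3 -> R) : \sum_(i < 3) f i = f i0 + f i1 + f i2.
Proof. rewrite !big_ord_recr big_ord0 /= add0r. congr (_ + _ + _); apply/f_equal/val_inj => //. Qed.

Lemma vec3_ext (x y : pt) : x ord0 i0 = y ord0 i0 -> x ord0 i1 = y ord0 i1 ->
  x ord0 i2 = y ord0 i2 -> x = y.
Proof.
move=> h0 h1 h2; apply/rowP => i; case: (ord3 i) => [->|[->|->]]; by rewrite ?mxE.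
Qed.

Definition mk3 (a b c : R) : pt :=
  \row_(i < 3) (if i == i0 then a else if i == i1 then b else c).
Lemma mk3E0 (a b c : R) : mk3 a b c ord0 i0 = a. Proof. by rewrite mxE. Qed.
Lemma mk3E1 (a b c : R) : mk3 a b c ord0 i1 = b. Proof. by rewrite mxE. Qed.
Lemma mk3E2 (a b c : R) : mk3 a b c ord0 i2 = c. Proof. by rewrite mxE. Qed.

Definition dot (x y : pt) : R :=
  x ord0 i0 * y ord0 i0 + x ord0 i1 * y ord0 i1 + x ord0 i2 * y ord0 i2.
Definition nsq (x : pt) : R := dot x x.

Lemma enormE (x : pt) : enorm x = Num.sqrt (nsq x).
Proof. by rewrite /enorm sum3 /nsq /dot !expr2. Qed.

Lemma nsq_ge0 (x : pt) : 0 <= nsq x.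
Proof. rewrite /nsq /dot; nra. Qed.

Lemma enorm_ge0 (x : pt) : 0 <= enorm x.
Proof. by rewrite enormE sqrtr_ge0. Qed.

Lemma enorm_sq (x : pt) : enorm x ^+ 2 = nsq x.
Proof. by rewrite enormE sqr_sqrtr // nsq_ge0. Qed.

Lemma enorm_le (x : pt) (r : R) : 0 <= r -> (enorm x <= r <-> nsq x <= r ^+ 2).
Proof.
move=> r0; have := enorm_sq x; have := enorm_ge0 x; split => h; nra.
Qed.

Lemma enorm_lt (x : pt) (r : R) : 0 <= r -> (enorm x < r <-> nsq x < r ^+ 2).
Proof.
move=> r0; have := enorm_sq x; have := enorm_ge0 x; split => h; nra.
Qed.

Lemma enorm_ge (x : pt) (r : R) : 0 <= r -> (r <= enorm x <-> r ^+ 2 <= nsq x).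
Proof.
move=> r0; have := enorm_sq x; have := enorm_ge0 x; split => h; nra.
Qed.

Lemma lagrange (x y : pt) : nsq x * nsq y - dot x y ^+ 2 =
  (x ord0 i1 * y ord0 i2 - x ord0 i2 * y ord0 i1) ^+ 2 +
  (x ord0 i2 * y ord0 i0 - x ord0 i0 * y ord0 i2) ^+ 2 +
  (x ord0 i0 * y ord0 i1 - x ord0 i1 * y ord0 i0) ^+ 2.
Proof. rewrite /nsq /dot; ring. Qed.

Lemma cauchy_schwarz (x y : pt) : dot x y ^+ 2 <= nsq x * nsq y.
Proof.
have := lagrange x y.
set a := (_ - _) ^+ 2; set b := (_ - _) ^+ 2; set c := (_ - _) ^+ 2 => h.
have : 0 <= a by rewrite /a sqr_ge0.
have : 0 <= b by rewrite /b sqr_ge0.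
have : 0 <= c by rewrite /c sqr_ge0.
lra.
Qed.

Lemma dot_le (x y : pt) : dot x y <= enorm x * enorm y.
Proof.
have h := cauchy_schwarz x y; rewrite -!enorm_sq in h.
have hx := enorm_ge0 x; have hy := enorm_ge0 y.
set a := dot x y in h *; set b := enorm x * enorm y.
have hb : 0 <= b by rewrite /b mulr_ge0.
have h' : a ^+ 2 <= b ^+ 2 by rewrite /b exprMn.
case: (leP a b) => // hab.
have : b ^+ 2 < a ^+ 2 by nra.
lra.
Qed.

Lemma dotC x y : dot x y = dot y x.
Proof. rewrite /dot; ring. Qed.

Lemma nsqD x y : nsq (x + y) = nsq x + 2 * dot x y + nsq y.
Proof. rewrite /nsq /dot !mxE; ring. Qed.

Lemma enormD (x y : pt) : enorm (x + y) <= enorm x + enorm y.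
Proof.
apply/enorm_le; first by apply: addr_ge0; apply: enorm_ge0.
rewrite nsqD -!enorm_sq; have := dot_le x y; nra.
Qed.

Lemma sq_inj (u v : R) : 0 <= u -> 0 <= v -> u ^+ 2 = v ^+ 2 -> u = v.
Proof. by move=> hu hv /eqP; rewrite eqrXn2 // => /eqP. Qed.

Lemma enormZ (a : R) (x : pt) : enorm (a *: x) = `|a| * enorm x.
Proof.
have h1 : enorm (a *: x) ^+ 2 = (`|a| * enorm x) ^+ 2.
  rewrite exprMn real_normK ?num_real // !enorm_sq /nsq /dot !mxE; ring.
apply: sq_inj h1; first exact: enorm_ge0.
by rewrite mulr_ge0 // enorm_ge0.
Qed.

Lemma enormB (x y : pt) : enorm (x - y) = enorm (y - x).
Proof. by rewrite enormE /nsq /dot !mxE enormE /nsq /dot !mxE; congr Num.sqrt; ring. Qed.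

Lemma enorm_box (x : pt) : enorm x <= `|x ord0 i0| + `|x ord0 i1| + `|x ord0 i2|.
Proof.
apply/enorm_le; first by rewrite !addr_ge0.
have := real_normK (num_real (x ord0 i0)); have := real_normK (num_real (x ord0 i1)).
have := real_normK (num_real (x ord0 i2)).
have := normr_ge0 (x ord0 i0); have := normr_ge0 (x ord0 i1); have := normr_ge0 (x ord0 i2).
rewrite /nsq /dot. nra.
Qed.

End Basics.


Section Struct.
Variable R : realType.
Notation pt := 'rV[R]_3.

Definition capf (c : pt) (r : R) (v x : pt) :=
  exists a b, 0 <= a <= 1 /\ eball c r b /\ x = a *: v + (1 - a) *: b.

Definition Sform (c : pt) (r : R) (V : set pt) (x : pt) :=
  exists a v b, 0 <= a <= 1 /\ (a = 0 \/ V v) /\ eball c r b /\ x = a *: v + (1 - a) *: b.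

Definition segc (c : pt) (r : R) (V : set pt) :=
  forall v w, V v -> V w -> v <> w -> segment v w `&` eball c r !=set0.

Lemma eball_c (c : pt) (r : R) : 0 <= r -> eball c r c.
Proof.
move=> r0; rewrite /eball /=; apply/enorm_le => //.
rewrite /nsq /dot !mxE subrr; nra.
Qed.

Lemma comb_norm (c v b : pt) (a : R) : 0 <= a <= 1 ->
  enorm (a *: v + (1 - a) *: b - c) <= a * enorm (v - c) + (1 - a) * enorm (b - c).
Proof.
move=> /andP[a0 a1].
have -> : a *: v + (1 - a) *: b - c = a *: (v - c) + (1 - a) *: (b - c).
  apply/rowP => i; rewrite !mxE; ring.
apply: le_trans (enormD _ _) _.
rewrite !enormZ !ger0_norm //; lra.
Qed.

Lemma cap_norm (c v b : pt) (r a : R) : 0 <= a <= 1 -> eball c r b ->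
  enorm (a *: v + (1 - a) *: b - c) <= a * enorm (v - c) + (1 - a) * r.
Proof.
move=> ha hb; apply: le_trans (comb_norm c v b ha) _.
move: ha => /andP[a0 a1]; rewrite /eball /= in hb.
have : (1 - a) * enorm (b - c) <= (1 - a) * r by apply: ler_wpM2l => //; lra.
lra.
Qed.

Lemma eball_conv (c b1 b2 : pt) (r th : R) : 0 <= th <= 1 -> eball c r b1 -> eball c r b2 ->
  eball c r (th *: b1 + (1 - th) *: b2).
Proof.
move=> ht h1 h2; rewrite /eball /=.
apply: le_trans (comb_norm c b1 b2 ht) _.
move: ht => /andP[t0 t1]; rewrite /eball /= in h1 h2.
have : th * enorm (b1 - c) <= th * r by apply: ler_wpM2l.
have : (1 - th) * enorm (b2 - c) <= (1 - th) * r by apply: ler_wpM2l => //; lra.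
lra.
Qed.

Lemma ball_merge (c b1 b2 : pt) (r al be : R) : 0 <= al -> 0 <= be ->
  eball c r b1 -> eball c r b2 ->
  exists b, eball c r b /\ al *: b1 + be *: b2 = (al + be) *: b.
Proof.
move=> a0 b0 h1 h2.
have [s0|s0] := eqVneq (al + be) 0.
  have al0 : al = 0 by lra. have be0 : be = 0 by lra.
  exists b1; split => //; apply/rowP => i; rewrite !mxE al0 be0; ring.
exists ((al / (al + be)) *: b1 + (1 - al / (al + be)) *: b2); split.
  apply: eball_conv => //; apply/andP; split.
    by apply: divr_ge0 => //; lra.
  rewrite ler_pdivrMr; lra.
apply/rowP => i; rewrite !mxE; field => //.
Qed.

Lemma pair_merge (c : pt) (r : R) (V : set pt) (v w : pt) (al be : R) :
  0 <= r -> segc c r V -> 0 <= al -> 0 <= be -> (al = 0 \/ V v) -> V w ->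
  exists a' u q, 0 <= a' <= al + be /\ V u /\ eball c r q /\
    al *: v + be *: w = a' *: u + (al + be - a') *: q.
Proof.
move=> r0 hseg a0 b0 hv hw.
have [al0|alnz] := eqVneq al 0.
  exists be, w, c; split; first by apply/andP; split; lra.
  split => //; split; first exact: eball_c.
  rewrite al0 scale0r add0r; apply/rowP => i; rewrite !mxE; ring.
have Vv : V v by case: hv => // h; rewrite h eqxx in alnz.
have [be0|benz] := eqVneq be 0.
  exists al, v, c; split; first by apply/andP; split; lra.
  split => //; split; first exact: eball_c.
  rewrite be0 scale0r addr0; apply/rowP => i; rewrite !mxE; ring.
have [vw|vw] := eqVneq v w.
  exists (al + be), v, c; split; first by apply/andP; split; lra.
  split => //; split; first exact: eball_c.
  rewrite -vw; apply/rowP => i; rewrite !mxE; ring.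
have [q [[s [/andP[s0 s1] ->]] hq]] := hseg v w Vv hw (elimN eqP vw).
have apos : 0 < al by rewrite lt_neqAle eq_sym alnz.
have bpos : 0 < be by rewrite lt_neqAle eq_sym benz.
case: (leP be (s * (al + be))) => hs.
  have spos : 0 < s by nra.
  exists (al + be - be / s), v, ((1 - s) *: v + s *: w); split.
    apply/andP; split; last first.
      have : 0 <= be / s by apply: divr_ge0; lra.
      lra.
    rewrite subr_ge0 ler_pdivrMr //; lra.
  split => //; split => //.
  apply/rowP => i; rewrite !mxE; field; lra.
have s1' : s < 1 by nra.
exists (al + be - al / (1 - s)), w, ((1 - s) *: v + s *: w); split.
  apply/andP; split; last first.
    have : 0 <= al / (1 - s) by apply: divr_ge0; lra.
    lra.
  rewrite subr_ge0 ler_pdivrMr; lra.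
split => //; split => //.
apply/rowP => i; rewrite !mxE; field; lra.
Qed.

Lemma conv_struct_aux (c : pt) (r : R) (V : set pt) : 0 <= r -> segc c r V ->
  forall n (w : 'I_n -> R) (p : 'I_n -> pt), (forall i, 0 <= w i) ->
  (forall i, (eball c r `|` V) (p i)) ->
  exists a v b, 0 <= a <= \sum_(i < n) w i /\ (a = 0 \/ V v) /\ eball c r b /\
    \sum_(i < n) w i *: p i = a *: v + (\sum_(i < n) w i - a) *: b.
Proof.
move=> r0 hseg; elim => [|n IH] w p hw hp.
  exists 0, c, c; rewrite !big_ord0; split; first by rewrite lexx.
  split; first by left. split; first exact: eball_c.
  by rewrite subrr !scale0r addr0.
have [a [v [b [/andP[ha1 ha2] [hv [hb E1]]]]]] :=
  IH (fun i => w (widen_ord (leqnSn n) i)) (fun i => p (widen_ord (leqnSn n) i))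
     (fun i => hw _) (fun i => hp _).
rewrite !big_ord_recr /= E1.
set sg := \sum_(i < n) w (widen_ord (leqnSn n) i) in ha2 E1 *.
have wn0 := hw ord_max.
case: (hp ord_max) => hpn.
  have h0 : 0 <= sg - a by lra.
  have [b' [hb' E3]] := ball_merge h0 wn0 hb hpn.
  exists a, v, b'; split; first by apply/andP; split; lra.
  split => //; split => //.
  rewrite -addrA E3; congr (_ + _); congr (_ *: _); ring.
have [a' [u [q [/andP[h1 h2] [hu [hq E2]]]]]] := pair_merge r0 hseg ha1 wn0 hv hpn.
have h0 : 0 <= sg - a by lra.
have h0' : 0 <= a + w ord_max - a' by lra.
have [b' [hb' E3]] := ball_merge h0 h0' hb hq.
exists a', u, b'; split; first by apply/andP; split; lra.
split; first by right. split => //.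
rewrite addrAC E2 -addrA [X in _ + X = _]addrC E3; congr (_ + _); congr (_ *: _); ring.
Qed.

Lemma conv_struct (c : pt) (r : R) (V : set pt) (x : pt) : 0 <= r -> segc c r V ->
  conv_hull (eball c r `|` V) x -> Sform c r V x.
Proof.
move=> r0 hseg [n [w [p [hw [hs [hp ->]]]]]].
have [a [v [b [ha [hv [hb E]]]]]] := conv_struct_aux r0 hseg hw hp.
rewrite hs in ha E; exists a, v, b; split => //.
Qed.

Lemma conv_in (S : set pt) (x : pt) : S x -> conv_hull S x.
Proof.
move=> hx; exists 1%N, (fun=> 1), (fun=> x); split => //; split.
  by rewrite big_ord1.
split => //; by rewrite big_ord1 scale1r.
Qed.

End Struct.


Section Center.
Variable R : realType.
Notation pt := 'rV[R]_3.

Lemma enorm_unit (n : pt) : nsq n = 1 -> enorm n = 1.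
Proof. by move=> h; rewrite enormE h sqrtr1. Qed.

Lemma dot_lin (a : R) (v b c n : pt) :
  dot (a *: v + (1 - a) *: b - c) n = a * dot (v - c) n + (1 - a) * dot (b - c) n.
Proof. rewrite /dot !mxE; ring. Qed.

Lemma dot_ball (c b n : pt) (r : R) : nsq n = 1 -> eball c r b -> dot (b - c) n <= r.
Proof.
move=> hn hb; apply: le_trans (dot_le _ _) _.
by rewrite (enorm_unit hn) mulr1.
Qed.

Lemma halfspace (c n : pt) (r : R) (V : set pt) (x : pt) : 0 <= r -> segc c r V ->
  nsq n = 1 -> (forall w, V w -> dot (w - c) n <= r) ->
  conv_hull (eball c r `|` V) x -> dot (x - c) n <= r.
Proof.
move=> r0 hseg hn hV hx.
have [a [v [b [/andP[a0 a1] [hv [hb ->]]]]]] := conv_struct r0 hseg hx.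
rewrite dot_lin.
have hb' := dot_ball hn hb.
case: hv => [->|hv]; first by lra.
have hv' := hV _ hv.
have : a * dot (v - c) n <= a * r by apply: ler_wpM2l.
have : (1 - a) * dot (b - c) n <= (1 - a) * r by apply: ler_wpM2l => //; lra.
lra.
Qed.

Definition outside (c : pt) (r : R) (V : set pt) := forall v, V v -> ~ eball c r v.

Lemma cap_disj (c : pt) (r : R) (V : set pt) (v w n : pt) : segc c r V -> outside c r V ->
  V v -> V w -> v <> w -> nsq n = 1 -> r <= dot (v - c) n -> r < dot (w - c) n -> False.
Proof.
move=> hseg hout hv hw vw hn h1 h2.
have [q [[t [/andP[t0 t1] Eq]] hq]] := hseg v w hv hw vw.
have := dot_ball hn hq.
have -> : dot (q - c) n = (1 - t) * dot (v - c) n + t * dot (w - c) n.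
  rewrite Eq /dot !mxE; ring.
have [t00|tpos] := eqVneq t 0.
  move=> _; apply: (hout v hv). move: hq; rewrite Eq t00 subr0 scale1r scale0r addr0 //.
have tp : 0 < t by rewrite lt_neqAle eq_sym tpos.
nra.
Qed.

Lemma perp_exists (A d : pt) : exists e : pt, nsq e = 1 /\ dot A e = 0 /\ 0 <= dot e d.
Proof.
suff [e [h1 h2]] : exists e : pt, nsq e = 1 /\ dot A e = 0.
  case: (leP 0 (dot e d)) => hd; first by exists e.
  exists (- e); split.
    have -> : nsq (- e) = nsq e by rewrite /nsq /dot !mxE; ring.
    by [].
  split.
    have -> : dot A (- e) = - dot A e by rewrite /dot !mxE; ring.
    by rewrite h2 oppr0.
  move: hd; rewrite /dot !mxE; lra.
set s2 := A ord0 i0 ^+ 2 + A ord0 i1 ^+ 2.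
have s20 : 0 <= s2 by rewrite /s2 addr_ge0 // sqr_ge0.
have [s0|snz] := eqVneq s2 0.
  have a0 : A ord0 i0 = 0 by apply/eqP; rewrite -sqrf_eq0; apply/eqP; move: s0; rewrite /s2; have := sqr_ge0 (A ord0 i1); have := sqr_ge0 (A ord0 i0); lra.
  exists (mk3 1 0 0); rewrite /nsq /dot !mk3E0 !mk3E1 !mk3E2 a0; split; ring.
set s := Num.sqrt s2.
have ss : s ^+ 2 = s2 by rewrite sqr_sqrtr.
have sp : 0 < s by rewrite sqrtr_gt0 lt_neqAle eq_sym snz.
exists (mk3 (- A ord0 i1 / s) (A ord0 i0 / s) 0); rewrite /nsq /dot !mk3E0 !mk3E1 !mk3E2; split.
  have sn : s != 0 by rewrite gt_eqF.
  have -> : - A ord0 i1 / s * (- A ord0 i1 / s) + A ord0 i0 / s * (A ord0 i0 / s) + 0 * 0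
    = s2 / s ^+ 2 by rewrite /s2; field.
  by rewrite ss divff.
field; by rewrite gt_eqF.
Qed.

Lemma nsq0 (d : pt) : nsq d = 0 -> d = 0.
Proof.
rewrite /nsq /dot => h.
have := sqr_ge0 (d ord0 i0); have := sqr_ge0 (d ord0 i1); have := sqr_ge0 (d ord0 i2).
rewrite !expr2 => h0 h1 h2.
have e0 : d ord0 i0 * d ord0 i0 = 0 by lra.
have e1 : d ord0 i1 * d ord0 i1 = 0 by lra.
have e2 : d ord0 i2 * d ord0 i2 = 0 by lra.
move: e0 e1 e2; rewrite -!expr2 => /eqP; rewrite sqrf_eq0 => /eqP e0 /eqP; rewrite sqrf_eq0 => /eqP e1 /eqP; rewrite sqrf_eq0 => /eqP e2.
by apply: vec3_ext; rewrite !mxE.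
Qed.

Lemma nsq_comb (k b : R) (A e : pt) :
  nsq (k *: A + b *: e) = k ^+ 2 * nsq A + 2 * k * b * dot A e + b ^+ 2 * nsq e.
Proof. rewrite /nsq /dot !mxE; ring. Qed.

Lemma good_normal (c d : pt) (r : R) (V : set pt) : 0 < r -> segc c r V -> outside c r V ->
  0 < nsq d -> exists n, nsq n = 1 /\ 0 < dot n d /\ forall w, V w -> dot (w - c) n <= r.
Proof.
move=> r0 hseg hout hd.
have ed0 := enorm_ge0 d; have eds := enorm_sq d.
have edp : 0 < enorm d by nra.
case: (pselect (exists v, V v /\ r * enorm d < dot (v - c) d)) => [[v [hv hvd]]|hno].
  set A := v - c.
  have hAd := dot_le A d.
  have eA0 := enorm_ge0 A; have eAs := enorm_sq A.
  have eAr : r < enorm A by nra.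
  set nA := nsq A.
  have nAr : r ^+ 2 < nA by rewrite /nA -eAs; nra.
  have nAp : 0 < nA by nra.
  have [e [he1 [he2 he3]]] := perp_exists A d.
  set k := r / nA.
  have kp : 0 < k by rewrite /k divr_gt0.
  have b2p : 0 <= 1 - r ^+ 2 / nA by rewrite subr_ge0 ler_pdivrMr //; lra.
  set b := Num.sqrt (1 - r ^+ 2 / nA).
  have bs : b ^+ 2 = 1 - r ^+ 2 / nA by rewrite sqr_sqrtr.
  have b0 : 0 <= b by apply: sqrtr_ge0.
  exists (k *: A + b *: e); split.
    rewrite nsq_comb he1 he2 bs /k -/nA; field; lra.
  have hAn : dot A (k *: A + b *: e) = r.
    have -> : dot A (k *: A + b *: e) = k * nsq A + b * dot A e by rewrite /nsq /dot !mxE; ring.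
    rewrite he2 mulr0 addr0 /k -/nA; field; lra.
  split.
    have -> : dot (k *: A + b *: e) d = k * dot A d + b * dot e d by rewrite /dot !mxE; ring.
    have : 0 < dot A d by nra.
    have : 0 <= b * dot e d by apply: mulr_ge0.
    nra.
  move=> w hw; case: (eqVneq w v) => [->|wv]; first by rewrite hAn.
  case: (leP (dot (w - c) (k *: A + b *: e)) r) => // hlt.
  have vw' : v <> w by move=> e'; rewrite e' eqxx in wv.
  exfalso; apply: (cap_disj hseg hout hv hw vw' _ _ hlt).
    rewrite nsq_comb he1 he2 bs /k -/nA; field; lra.
  by rewrite -/A hAn.
exists ((enorm d)^-1 *: d); split.
  rewrite /nsq /dot !mxE -/(dot d d) -/(nsq d).
  have -> : (enorm d)^-1 * d ord0 i0 * ((enorm d)^-1 * d ord0 i0) + (enorm d)^-1 * d ord0 i1 * ((enorm d)^-1 * d ord0 i1) +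
    (enorm d)^-1 * d ord0 i2 * ((enorm d)^-1 * d ord0 i2) = nsq d / enorm d ^+ 2.
    rewrite /nsq /dot; field; lra.
  rewrite eds divff //; lra.
split.
  have -> : dot ((enorm d)^-1 *: d) d = nsq d / enorm d by rewrite /nsq /dot !mxE; field; lra.
  by apply: divr_gt0.
move=> w hw.
have h : dot (w - c) d <= r * enorm d by case: (leP (dot (w - c) d) (r * enorm d)) => // h; exfalso; apply: hno; exists w.
have -> : dot (w - c) ((enorm d)^-1 *: d) = dot (w - c) d / enorm d by rewrite /dot !mxE; field; lra.
by rewrite ler_pdivrMr.
Qed.

Lemma center (c o : pt) (r : R) (V : set pt) : 0 < r -> segc c r V -> outside c r V ->
  (forall x, conv_hull (eball c r `|` V) x -> conv_hull (eball c r `|` V) (2%:R *: o - x)) ->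
  2%:R *: o = c + c.
Proof.
move=> r0 hseg hout hsym.
set d := 2%:R *: o - c - c.
suff : nsq d = 0.
  move/nsq0 => h; apply/rowP => i; move/rowP: h => /(_ i); rewrite /d !mxE; lra.
have := nsq_ge0 d; case: (leP (nsq d) 0) => hd h0; first by lra.
exfalso.
have [n [hn1 [hn2 hn3]]] := good_normal r0 hseg hout hd.
have hK : conv_hull (eball c r `|` V) (c - r *: n).
  apply: conv_in; left; rewrite /eball /=; apply/enorm_le; first lra.
  have -> : nsq (c - r *: n - c) = r ^+ 2 * nsq n by rewrite /nsq /dot !mxE; ring.
  by rewrite hn1 mulr1.
have := halfspace (ltW r0) hseg hn1 hn3 (hsym _ hK).
have -> : dot (2%:R *: o - (c - r *: n) - c) n = dot n d + r * nsq n.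
  by rewrite /d /nsq /dot !mxE; ring.
rewrite hn1; lra.
Qed.

End Center.


Section Finite.
Variable R : realType.
Notation pt := 'rV[R]_3.

Lemma unit_coord (x : pt) i : nsq x = 1 -> -1 <= x ord0 i <= 1.
Proof.
rewrite /nsq /dot => h; apply/andP.
have := sqr_ge0 (x ord0 i0); have := sqr_ge0 (x ord0 i1); have := sqr_ge0 (x ord0 i2).
rewrite !expr2.
case: (ord3 i) => [->|[->|->]] => *; split; nra.
Qed.

Definition cellc (N : nat) (t : R) : 'I_(N.*2).+1 := inord (Num.trunc (N%:R * (t + 1))).

Lemma cellc_val N t : -1 <= t <= 1 ->
  (val (cellc N t))%:R <= N%:R * (t + 1) < (val (cellc N t)).+1%:R.
Proof.
move=> /andP[t0 t1].
have hN : 0 <= (N%:R : R) by apply: ler0n.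
have hp : 0 <= (N%:R : R) * (t + 1) by apply: mulr_ge0 => //; lra.
have := trunc_itv hp => /andP[h1 h2].
suff -> : val (cellc N t) = Num.trunc (N%:R * (t + 1)) by rewrite h1 h2.
rewrite /cellc /= inordK //.
rewrite ltnS -(ler_nat R) -mul2n natrM; apply: le_trans h1 _.
have -> : (2%:R : R) = 2 by [].
nra.
Qed.

Lemma cellc_close N t t' : -1 <= t <= 1 -> -1 <= t' <= 1 -> cellc N t = cellc N t' ->
  (N%:R * t - N%:R * t') ^+ 2 < 1.
Proof.
move=> ht ht' e.
have := cellc_val N ht; have := cellc_val N ht'; rewrite e.
move=> /andP[a1 a2] /andP[b1 b2].
move: a2 b2; rewrite -addn1 natrD => a2 b2.
have hlo : -1 < N%:R * t - N%:R * t' by lra.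
have hhi : N%:R * t - N%:R * t' < 1 by lra.
nra.
Qed.

Definition dir (c v : pt) : pt := (enorm (v - c))^-1 *: (v - c).

Lemma dir_unit (c v : pt) : 0 < enorm (v - c) -> nsq (dir c v) = 1.
Proof.
move=> h; have := enorm_sq (v - c) => hs.
have -> : nsq (dir c v) = nsq (v - c) / enorm (v - c) ^+ 2.
  rewrite /dir /nsq /dot !mxE; field; lra.
rewrite -hs divff // sqrf_eq0 gt_eqF //.
Qed.

Lemma dot_dir (c v w : pt) : 0 < enorm (v - c) ->
  dot (v - c) (dir c w) = enorm (v - c) * dot (dir c v) (dir c w).
Proof.
move=> h.
have hd : forall (k : R) (a b : pt), dot (k *: a) b = k * dot a b by move=> k a b; rewrite /dot !mxE; ring.
rewrite [dir c v]/dir hd mulrA divff ?mul1r //; apply/eqP; lra.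
Qed.

Lemma sep (c : pt) (r rho : R) (V : set pt) (v w : pt) : 0 < r -> r <= rho ->
  segc c r V -> outside c r V -> V v -> V w -> v <> w ->
  rho <= enorm (v - c) -> rho <= enorm (w - c) ->
  2 * (1 - r / rho) <= nsq (dir c v - dir c w).
Proof.
move=> r0 rrho hseg hout hv hw vw hvr hwr.
have evp : 0 < enorm (v - c) by lra.
have ewp : 0 < enorm (w - c) by lra.
have uv := dir_unit evp; have uw := dir_unit ewp.
have hdw : dot (w - c) (dir c w) = enorm (w - c).
  rewrite dot_dir // -/(nsq _) uw; ring.
have hle : dot (v - c) (dir c w) <= r.
  case: (leP (dot (v - c) (dir c w)) r) => // hlt; exfalso.
  have wv : w <> v by move=> e; apply: vw.
  apply: (cap_disj hseg hout hw hv wv uw _ hlt); lra.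
rewrite dot_dir // in hle.
have -> : nsq (dir c v - dir c w) = nsq (dir c v) + nsq (dir c w) - 2 * dot (dir c v) (dir c w).
  rewrite /nsq /dot !mxE; ring.
rewrite uv uw.
set q := dot (dir c v) (dir c w) in hle *.
have hq : q <= r / enorm (v - c) by rewrite ler_pdivlMr // mulrC.
have : r / enorm (v - c) <= r / rho.
  rewrite ler_pdivrMr // mulrAC ler_pdivlMr; last lra.
  by apply: ler_wpM2l; lra.
lra.
Qed.

Notation cellT N := ('I_(N.*2).+1 * 'I_(N.*2).+1 * 'I_(N.*2).+1)%type.

Definition cell (N : nat) (c v : pt) : cellT N :=
  (cellc N (dir c v ord0 i0), cellc N (dir c v ord0 i1), cellc N (dir c v ord0 i2)).

Lemma cell_close N (c v w : pt) : nsq (dir c v) = 1 -> nsq (dir c w) = 1 ->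
  cell N c v = cell N c w -> N%:R ^+ 2 * nsq (dir c v - dir c w) < 3.
Proof.
move=> hv hw [e0 e1 e2].
have h0 := cellc_close (unit_coord i0 hv) (unit_coord i0 hw) e0.
have h1 := cellc_close (unit_coord i1 hv) (unit_coord i1 hw) e1.
have h2 := cellc_close (unit_coord i2 hv) (unit_coord i2 hw) e2.
have -> : N%:R ^+ 2 * nsq (dir c v - dir c w) =
  (N%:R * dir c v ord0 i0 - N%:R * dir c w ord0 i0) ^+ 2 +
  (N%:R * dir c v ord0 i1 - N%:R * dir c w ord0 i1) ^+ 2 +
  (N%:R * dir c v ord0 i2 - N%:R * dir c w ord0 i2) ^+ 2.
  rewrite /nsq /dot !mxE; ring.
lra.
Qed.

Lemma finite_far (c : pt) (r rho : R) (V : set pt) : 0 < r -> r < rho ->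
  segc c r V -> outside c r V ->
  exists s : seq pt, forall v, V v -> rho <= enorm (v - c) -> v \in s.
Proof.
move=> r0 rrho hseg hout.
set eta := 2 * (1 - r / rho).
have etap : 0 < eta.
  rewrite /eta; have : r / rho < 1 by rewrite ltr_pdivrMr; lra.
  lra.
set N := (Num.trunc (3 / eta)).+1.
have hN : 3 < N%:R ^+ 2 * eta.
  have hp : 0 <= 3 / eta by apply: divr_ge0; lra.
  have := trunc_itv hp => /andP[_ h2].
  have hN1 : 1 <= (N%:R : R) by rewrite /N ler1n.
  have : 3 < N%:R * eta by rewrite -ltr_pdivrMr.
  nra.
set P := fun k : cellT N => fun v : pt => V v /\ rho <= enorm (v - c) /\ cell N c v = k.
exists (map (fun k => xget c (P k)) (enum [set: cellT N])).
move=> v hv hvr.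
have hP : P (cell N c v) (xget c (P (cell N c v))).
  by apply: xgetPex; exists v.
set v' := xget c (P (cell N c v)) in hP.
have -> : v = v'.
  case: hP => hv' [hv'r hc].
  case: (pselect (v = v')) => // vv'; exfalso.
  have hs := sep r0 (ltW rrho) hseg hout hv hv' vv' hvr hv'r.
  have evp : 0 < enorm (v - c) by lra.
  have ev'p : 0 < enorm (v' - c) by lra.
  have := cell_close (dir_unit evp) (dir_unit ev'p) (esym hc).
  have : N%:R ^+ 2 * eta <= N%:R ^+ 2 * nsq (dir c v - dir c v').
    by apply: ler_wpM2l => //; apply: sqr_ge0.
  lra.
rewrite /v'; apply: (map_f (fun k => xget c (P k))); by rewrite mem_enum in_setT.
Qed.

End Finite.


Section MaxSwap.
Variable R : realType.
Notation pt := 'rV[R]_3.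

Lemma seq_max (f : pt -> R) (P : pt -> Prop) (s : seq pt) :
  (exists v, P v /\ v \in s) -> exists v1, P v1 /\ forall w, P w -> w \in s -> f w <= f v1.
Proof.
elim: s => [[v [_]]//|x s IH] hex.
case: (pselect (exists v, P v /\ v \in s)) => [h|h].
  have [v1 [hv1 hmax]] := IH h.
  case: (pselect (P x)) => hx.
    case: (leP (f x) (f v1)) => hfx.
      exists v1; split => // w hw; rewrite in_cons => /orP[/eqP->//|]; exact: hmax.
    exists x; split => // w hw; rewrite in_cons => /orP[/eqP->//|hws].
    apply: le_trans (hmax _ hw hws) _; exact: ltW.
  exists v1; split => // w hw; rewrite in_cons => /orP[/eqP e|]; last exact: hmax.
  by rewrite e in hw.
have [v [hv]] := hex; rewrite in_cons => /orP[/eqP e|hvs]; last first.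
  by exfalso; apply: h; exists v.
rewrite e in hv; exists x; split => // w hw; rewrite in_cons => /orP[/eqP->//|hws].
by exfalso; apply: h; exists w.
Qed.

Lemma swap (Q : pt -> pt -> Prop) (p : pt) (s : seq pt) :
  (forall e : R, 0 < e -> exists y, enorm (y - p) < e /\ exists v, v \in s /\ Q v y) ->
  exists v, v \in s /\ forall e : R, 0 < e -> exists y, enorm (y - p) < e /\ Q v y.
Proof.
elim: s => [|x s IH] h.
  have [y [_ [v []]]] := h 1 ltr01; by [].
case: (pselect (exists e1 : R, 0 < e1 /\ forall y, enorm (y - p) < e1 -> ~ Q x y)) => [[e1 [e10 he1]]|hno].
  have [v [hv hQ]] : exists v, v \in s /\ forall e : R, 0 < e -> exists y, enorm (y - p) < e /\ Q v y.
    apply: IH => e e0.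
    have hm : 0 < Num.min e e1 by rewrite lt_min e0 e10.
    have [y [hy [v [hv hQ]]]] := h _ hm.
    move: hy; rewrite lt_min => /andP[hy1 hy2].
    exists y; split => //; exists v; split => //.
    move: hv; rewrite in_cons => /orP[/eqP e'|//].
    by exfalso; apply: (he1 y hy2); rewrite -e'.
  by exists v; split => //; rewrite in_cons hv orbT.
exists x; split; first by rewrite in_cons eqxx.
move=> e e0; case: (pselect (exists y, enorm (y - p) < e /\ Q x y)) => // hn.
exfalso; apply: hno; exists e; split => // y hy hq; apply: hn; by exists y.
Qed.

Lemma max_vertex (c : pt) (r : R) (V : set pt) : 0 < r -> segc c r V -> outside c r V ->
  forall v0, V v0 -> exists v1, V v1 /\ forall w, V w -> enorm (w - c) <= enorm (v1 - c).
Proof.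
move=> r0 hseg hout v0 hv0.
set rho := enorm (v0 - c).
have hr : r < rho.
  case: (leP rho r) => // h; exfalso; apply: (hout v0 hv0); exact: h.
have [s hs] := finite_far r0 hr hseg hout.
have [v1 [[hv1 hv1r] hmax]] := seq_max (fun v => enorm (v - c)) (P := fun v => V v /\ rho <= enorm (v - c))
  (ex_intro _ v0 (conj (conj hv0 (lexx _)) (hs v0 hv0 (lexx _)))).
exists v1; split => // w hw.
case: (leP rho (enorm (w - c))) => hw'.
  by apply: hmax; [split|apply: hs].
by apply: le_trans hv1r; apply: ltW.
Qed.

Lemma antipode (c : pt) (r a : R) (V : set pt) (w : pt) : 0 < r -> segc c r V -> outside c r V ->
  (forall x, conv_hull (eball c r `|` V) x -> conv_hull (eball c r `|` V) (2%:R *: c - x)) ->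
  (forall u, V u -> enorm (u - c) <= a) -> V w -> enorm (w - c) = a -> V (2%:R *: c - w).
Proof.
move=> r0 hseg hout hsym hmax hw hwa.
have hK := hsym _ (conv_in (or_intror hw : (eball c r `|` V) w)).
have [al [v [b [ha [hv [hb E]]]]]] := conv_struct (ltW r0) hseg hK.
move: (ha) => /andP[a0 a1].
have ar : r < a.
  case: (leP a r) => // h; exfalso; apply: (hout w hw); rewrite /eball /= hwa //.
have hn : enorm (2%:R *: c - w - c) = a.
  rewrite -hwa enormB; congr enorm; apply/rowP => i; rewrite !mxE; ring.
case: hv => [al0|hv].
  exfalso; move: hb; rewrite /eball /=.
  have -> : b = 2%:R *: c - w by rewrite E al0 scale0r add0r subr0 scale1r.
  lra.
have h2 := cap_norm v ha hb; rewrite -E hn in h2.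
have hva := hmax _ hv.
have hal : al = 1.
  have h1 : al * enorm (v - c) <= al * a by apply: ler_wpM2l.
  have : (1 - al) * (a - r) <= 0 by nra.
  nra.
by rewrite E hal scale1r subrr scale0r addr0.
Qed.

End MaxSwap.

Section RA.
Variable R : realType.
Lemma RA1 (a x h t r : R) : 0 < a -> 0 <= x -> 0 <= h -> x ^+ 2 + h <= a ^+ 2 -> 0 <= t <= 1 ->
  ((1 - t) * a + t * x) ^+ 2 + t ^+ 2 * h <= r ^+ 2 -> x ^+ 2 + h / 2 <= r ^+ 2.
Proof.
move=> a0 x0 h0 hxa /andP[t0 t1] hq.
have xa : x <= a by nra.
have hax : x ^+ 2 <= a * x by nra.
have f1 : x ^+ 2 + (1 - t) ^+ 2 * h <= ((1 - t) * a + t * x) ^+ 2.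
  have e1 : (1 - t) ^+ 2 * (x ^+ 2 + h) <= (1 - t) ^+ 2 * a ^+ 2 by apply: ler_wpM2l => //; apply: sqr_ge0.
  have e2 : 2 * t * (1 - t) * x ^+ 2 <= 2 * t * (1 - t) * (a * x) by apply: ler_wpM2l => //; nra.
  nra.
have f2 : h <= 2 * ((1 - t) ^+ 2 + t ^+ 2) * h.
  have hs : 0 <= 2 * ((1 - t) ^+ 2 + t ^+ 2) - 1.
    have -> : 2 * ((1 - t) ^+ 2 + t ^+ 2) - 1 = (2 * t - 1) ^+ 2 by ring.
    exact: sqr_ge0.
  have := mulr_ge0 hs h0; nra.
have f3 : (1 - t) ^+ 2 * h + t ^+ 2 * h = ((1 - t) ^+ 2 + t ^+ 2) * h by ring.
lra.
Qed.

Lemma RA2 (a x h t r : R) : 0 < a -> 0 <= x -> 0 < h -> x ^+ 2 + h <= a ^+ 2 -> 0 <= t <= 1 ->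
  ((1 - t) * a + t * x) ^+ 2 + t ^+ 2 * h <= r ^+ 2 -> r ^+ 2 <= x ^+ 2 + h / 2 ->
  x = 0 /\ h = a ^+ 2 /\ h = 2 * r ^+ 2.
Proof.
move=> a0 x0 h0 hxa /andP[t0 t1] hq hr.
have xa : x <= a by nra.
have hax : x ^+ 2 <= a * x by nra.
have f1 : x ^+ 2 + (1 - t) ^+ 2 * h <= ((1 - t) * a + t * x) ^+ 2.
  have e1 : (1 - t) ^+ 2 * (x ^+ 2 + h) <= (1 - t) ^+ 2 * a ^+ 2 by apply: ler_wpM2l => //; apply: sqr_ge0.
  have e2 : 2 * t * (1 - t) * x ^+ 2 <= 2 * t * (1 - t) * (a * x) by apply: ler_wpM2l => //; nra.
  nra.
have g : ((1 - t) ^+ 2 + t ^+ 2 - 1 / 2) * h <= 0 by nra.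
have th : t = 1 / 2.
  have : (2 * t - 1) ^+ 2 * h <= 0 by nra.
  have : 0 <= (2 * t - 1) ^+ 2 by apply: sqr_ge0.
  move=> hs hh.
  have : (2 * t - 1) ^+ 2 = 0 by nra.
  move/eqP; rewrite sqrf_eq0 => /eqP; lra.
rewrite th in hq f1.
have hx : (a + x) ^+ 2 <= 4 * x ^+ 2 + h by nra.
have hx2 : x * (a - x) <= 0 by nra.
have x00 : x = 0.
  case: (leP x 0) => hx0; first lra.
  have : x = a by nra.
  move=> xa'; rewrite xa' in hxa; nra.
rewrite x00 in hx hxa hq hr; split => //.
have ha : h = a ^+ 2 by nra.
split => //; nra.
Qed.
End RA.


Section Frame.
Variable R : realType.
Notation pt := 'rV[R]_3.

Definition cross (a b : pt) : pt :=
  mk3 (a ord0 i1 * b ord0 i2 - a ord0 i2 * b ord0 i1)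
      (a ord0 i2 * b ord0 i0 - a ord0 i0 * b ord0 i2)
      (a ord0 i0 * b ord0 i1 - a ord0 i1 * b ord0 i0).

Lemma gram (y a b : pt) : dot y (cross a b) ^+ 2 =
  nsq y * (nsq a * nsq b - dot a b ^+ 2) - dot y a * (dot y a * nsq b - dot a b * dot y b)
  + dot y b * (dot y a * dot a b - nsq a * dot y b).
Proof. rewrite /cross /nsq /dot !mk3E0 !mk3E1 !mk3E2; ring. Qed.

Lemma parseval (a b y : pt) : nsq a = 1 -> nsq b = 1 -> dot a b = 0 ->
  nsq y = dot y a ^+ 2 + dot y b ^+ 2 + dot y (cross a b) ^+ 2.
Proof. move=> ha hb hab; rewrite gram ha hb hab; ring. Qed.

Lemma cross_unit (a b : pt) : nsq a = 1 -> nsq b = 1 -> dot a b = 0 -> nsq (cross a b) = 1.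
Proof.
move=> ha hb hab.
have -> : nsq (cross a b) = nsq a * nsq b - dot a b ^+ 2.
  rewrite /cross /nsq /dot !mk3E0 !mk3E1 !mk3E2; ring.
rewrite ha hb hab; ring.
Qed.

Lemma cross_perp2 (a b : pt) : dot b (cross a b) = 0.
Proof. rewrite /cross /dot !mk3E0 !mk3E1 !mk3E2; ring. Qed.

Lemma dot_seg (t : R) (z w c e : pt) :
  dot ((1 - t) *: z + t *: w - c) e = (1 - t) * dot (z - c) e + t * dot (w - c) e.
Proof. rewrite /dot !mxE; ring. Qed.

Lemma dotZl (k : R) (a b : pt) : dot (k *: a) b = k * dot a b.
Proof. rewrite /dot !mxE; ring. Qed.

Lemma dotNl (a b : pt) : dot (- a) b = - dot a b.
Proof. rewrite /dot !mxE; ring. Qed.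

Lemma dir_scale (c v : pt) : 0 < enorm (v - c) -> v - c = enorm (v - c) *: dir c v.
Proof.
move=> h; rewrite /dir scalerA divff ?scale1r //; apply/eqP; lra.
Qed.

Lemma refl_sub (c w : pt) : 2%:R *: c - w - c = - (w - c).
Proof. apply/rowP => i; rewrite !mxE; ring. Qed.

Lemma seg_frame (c : pt) (r : R) (V : set pt) (z w e1 e2 e3 : pt) :
  0 <= r -> segc c r V -> V z -> V w -> z <> w ->
  (forall y, nsq y = dot y e1 ^+ 2 + dot y e2 ^+ 2 + dot y e3 ^+ 2) ->
  exists t : R, 0 <= t <= 1 /\
   ((1 - t) * dot (z - c) e1 + t * dot (w - c) e1) ^+ 2 +
   ((1 - t) * dot (z - c) e2 + t * dot (w - c) e2) ^+ 2 +
   ((1 - t) * dot (z - c) e3 + t * dot (w - c) e3) ^+ 2 <= r ^+ 2.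
Proof.
move=> r0 hseg hz hw zw hP.
have [q [[t [ht ->]] hq]] := hseg z w hz hw zw.
exists t; split => //.
rewrite /eball /= in hq; move/(enorm_le _ r0): hq.
by rewrite hP !dot_seg.
Qed.

Definition Zprop (c : pt) (r a : R) (V : set pt) (e1 e2 : pt) :=
  forall w, V w -> dot (w - c) e1 = 0 -> nsq (w - c) = 2 * r ^+ 2 -> enorm (w - c) = a ->
  dot (w - c) e2 ^+ 2 = r ^+ 2 -> False.

Lemma Zlemma (c : pt) (r a : R) (V : set pt) (w0 e1 : pt) :
  0 < r -> segc c r V -> nsq e1 = 1 ->
  (forall u, V u -> enorm (u - c) = a -> V (2%:R *: c - u)) ->
  V w0 -> dot (w0 - c) e1 = 0 -> nsq (w0 - c) = 2 * r ^+ 2 ->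
  nsq (dir c w0) = 1 /\ dot e1 (dir c w0) = 0 /\ Zprop c r a V e1 (dir c w0).
Proof.
move=> r0 hseg he1 hanti hw0 hw01 hw0n.
set k := enorm (w0 - c).
have hk2 : k ^+ 2 = 2 * r ^+ 2 by rewrite /k enorm_sq.
have k0 : 0 <= k by apply: enorm_ge0.
have kp : 0 < k by nra.
have hu := dir_unit kp.
set e2 := dir c w0.
have hsc : w0 - c = k *: e2 by apply: dir_scale.
have h12 : dot e1 e2 = 0.
  move: hw01; rewrite hsc dotZl dotC => h; nra.
split => //; split => //.
have hP := fun y => parseval y he1 hu h12.
set e3 := cross e1 e2 in hP.
have w0e2 : dot (w0 - c) e2 = k by rewrite hsc dotZl -/(nsq e2) hu mulr1.
have w0e3 : dot (w0 - c) e3 = 0 by rewrite hsc dotZl /e3 cross_perp2 mulr0.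
have Zin : forall u, V u -> dot (u - c) e1 = 0 -> 0 < dot (u - c) e2 ->
    dot (u - c) e2 ^+ 2 = r ^+ 2 -> dot (u - c) e3 ^+ 2 = r ^+ 2 -> False.
  move=> u hu1 hu2 hu3 hu4 hu5.
  have Y2r : dot (u - c) e2 = r by apply: sq_inj => //; lra.
  have w0u : w0 <> u.
    move=> e; move: hu5; rewrite -e w0e3; nra.
  have [t [/andP[t0 t1] ht]] := seg_frame (ltW r0) hseg hw0 hu1 w0u hP.
  rewrite hw01 hu2 w0e2 Y2r w0e3 in ht.
  have kr : r < k by nra.
  have h1t : 0 <= 1 - t by lra.
  have hkr : 0 <= k - r by lra.
  have hm := mulr_ge0 h1t hkr.
  have gr : r <= (1 - t) * k + t * r by nra.
  have ht2 : r ^+ 2 <= ((1 - t) * k + t * r) ^+ 2 by nra.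
  have e3t : ((1 - t) * 0 + t * dot (u - c) e3) ^+ 2 = t ^+ 2 * r ^+ 2 by rewrite mulr0 add0r exprMn hu5.
  rewrite e3t in ht.
  have tt : t ^+ 2 * r ^+ 2 <= 0 by nra.
  have t00 : t = 0.
    case: (eqVneq t 0) => // tnz; exfalso.
    have tp : 0 < t by rewrite lt_neqAle eq_sym tnz.
    have := mulr_gt0 (exprn_gt0 2 tp) (exprn_gt0 2 r0); lra.
  rewrite t00 in ht; nra.
move=> w hw hx hn hna hY2.
have hY3 : dot (w - c) e3 ^+ 2 = r ^+ 2 by move: (hP (w - c)); rewrite hn hx hY2; lra.
case: (ltgtP (dot (w - c) e2) 0) => hs.
- have hw' := hanti w hw hna.
  apply: (Zin _ hw').
  + by rewrite refl_sub dotNl hx oppr0.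
  + by rewrite refl_sub dotNl; lra.
  + by rewrite refl_sub dotNl sqrrN.
  + by rewrite refl_sub dotNl sqrrN.
- exact: (Zin w hw hx hs hY2 hY3).
- by move: hY2; rewrite hs; nra.
Qed.

End Frame.


Section Frame2.
Variable R : realType.
Notation pt := 'rV[R]_3.

Lemma cross_perp1 (a b : pt) : dot a (cross a b) = 0.
Proof. rewrite /cross /dot !mk3E0 !mk3E1 !mk3E2; ring. Qed.

Lemma key_bound (a x h r : R) : 0 < a -> 0 < h -> x ^+ 2 + h <= a ^+ 2 ->
  (exists t : R, 0 <= t <= 1 /\ ((1 - t) * a + t * `|x|) ^+ 2 + t ^+ 2 * h <= r ^+ 2) ->
  x ^+ 2 + h / 2 <= r ^+ 2 /\ (r ^+ 2 <= x ^+ 2 + h / 2 -> x = 0 /\ h = a ^+ 2 /\ h = 2 * r ^+ 2).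
Proof.
move=> a0 h0 hxa [t [ht hq]].
have hx2 : `|x| ^+ 2 = x ^+ 2 by rewrite real_normK ?num_real.
have hx0 := normr_ge0 x.
rewrite -hx2 in hxa *.
split; first exact: (@RA1 R a `|x| h t r a0 hx0 (ltW h0) hxa ht hq).
move=> hr.
have [h1 [h2 h3]] := @RA2 R a `|x| h t r a0 hx0 h0 hxa ht hq hr.
split => //; by apply/eqP; rewrite -normr_eq0 h1.
Qed.

Lemma vertex_good (c : pt) (r a : R) (V : set pt) (v1 e1 e2 w : pt) :
  0 < r -> segc c r V -> r < a -> V v1 -> V (2%:R *: c - v1) -> v1 - c = a *: e1 ->
  nsq e1 = 1 -> nsq e2 = 1 -> dot e1 e2 = 0 ->
  (forall u, V u -> enorm (u - c) <= a) -> Zprop c r a V e1 e2 -> V w ->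
  exists e, (e = e1 \/ e = e2 \/ e = cross e1 e2) /\ nsq (w - c) - dot (w - c) e ^+ 2 < r ^+ 2.
Proof.
move=> r0 hseg ra hv1 hv1' hsc he1 he2 h12 hmax hZ hw.
have hP := fun y => parseval y he1 he2 h12.
set e3 := cross e1 e2 in hP *.
have hy := hP (w - c).
set x := dot (w - c) e1 in hy *.
set Y2 := dot (w - c) e2 in hy *.
set Y3 := dot (w - c) e3 in hy *.
case: (ltP (Y2 ^+ 2 + Y3 ^+ 2) (r ^+ 2)) => hh.
  exists e1; split; first by left.
  rewrite hy -/x; lra.
have a0 : 0 < a by lra.
have hr2 : 0 < r ^+ 2 by apply: exprn_gt0.
set h := Y2 ^+ 2 + Y3 ^+ 2 in hh *.
have hp : 0 < h by lra.
have hya : x ^+ 2 + h <= a ^+ 2.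
  have := hmax _ hw; move/(enorm_le _ (ltW a0)); rewrite hy /h; lra.
have d1 : dot (v1 - c) e1 = a by rewrite hsc dotZl -/(nsq e1) he1 mulr1.
have d2 : dot (v1 - c) e2 = 0 by rewrite hsc dotZl h12 mulr0.
have d3 : dot (v1 - c) e3 = 0 by rewrite hsc dotZl /e3 cross_perp1 mulr0.
have d1' : dot (2%:R *: c - v1 - c) e1 = - a by rewrite refl_sub dotNl d1.
have d2' : dot (2%:R *: c - v1 - c) e2 = 0 by rewrite refl_sub dotNl d2 oppr0.
have d3' : dot (2%:R *: c - v1 - c) e3 = 0 by rewrite refl_sub dotNl d3 oppr0.
have neq : forall z, dot (z - c) e2 = 0 -> dot (z - c) e3 = 0 -> z <> w.
  move=> z hz2 hz3 e; move: hp; rewrite /h /Y2 /Y3 -e hz2 hz3; lra.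
have [kb keq] : x ^+ 2 + h / 2 <= r ^+ 2 /\ (r ^+ 2 <= x ^+ 2 + h / 2 -> x = 0 /\ h = a ^+ 2 /\ h = 2 * r ^+ 2).
  apply: key_bound => //.
  case: (leP 0 x) => hx.
    have [t [ht hb]] := seg_frame (ltW r0) hseg hv1 hw (neq _ d2 d3) hP.
    exists t; split => //; rewrite ger0_norm //.
    move: hb; rewrite d1 d2 d3 -/x -/Y2 -/Y3 /h; lra.
  have [t [ht hb]] := seg_frame (ltW r0) hseg hv1' hw (neq _ d2' d3') hP.
  exists t; split => //; rewrite ltr0_norm //.
  move: hb; rewrite d1' d2' d3' -/x -/Y2 -/Y3 /h.
  have -> : ((1 - t) * - a + t * x) ^+ 2 = ((1 - t) * a + t * - x) ^+ 2 by ring.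
  lra.
case: (ltgtP (Y2 ^+ 2) (Y3 ^+ 2)) => hc.
- exists e3; split; first by right; right.
  rewrite hy -/Y3 /h in kb *; lra.
- exists e2; split; first by right; left.
  rewrite hy -/Y2 /h in kb *; lra.
case: (ltP (x ^+ 2 + h / 2) (r ^+ 2)) => hq.
  exists e2; split; first by right; left.
  rewrite hy -/Y2; move: hq; rewrite /h; lra.
have [hx0 [ha hh2]] := keq hq.
exfalso; apply: (hZ w hw).
- exact: hx0.
- rewrite hy -/x -/Y2 -/Y3 hx0; move: hh2; rewrite /h; lra.
- apply: sq_inj; [exact: enorm_ge0|lra|].
  rewrite enorm_sq hy -/x -/Y2 -/Y3 hx0; move: ha; rewrite /h; lra.
- move: hh2; rewrite /h hc; lra.
Qed.

End Frame2.


Section Frame3.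
Variable R : realType.
Notation pt := 'rV[R]_3.

Definition frameok (c : pt) (r : R) (V : set pt) (e1 e2 e3 : pt) :=
  nsq e1 = 1 /\ nsq e2 = 1 /\ nsq e3 = 1 /\
  (forall y, nsq y = dot y e1 ^+ 2 + dot y e2 ^+ 2 + dot y e3 ^+ 2) /\
  forall w, V w -> exists e, (e = e1 \/ e = e2 \/ e = e3) /\ nsq (w - c) - dot (w - c) e ^+ 2 < r ^+ 2.

Lemma frame_exists (c : pt) (r : R) (V : set pt) : 0 < r -> segc c r V -> outside c r V ->
  (forall x, conv_hull (eball c r `|` V) x -> conv_hull (eball c r `|` V) (2%:R *: c - x)) ->
  exists e1 e2 e3, frameok c r V e1 e2 e3.
Proof.
move=> r0 hseg hout hsym.
case: (pselect (exists v0, V v0)) => [[v0 hv0]|hno]; last first.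
  exists (mk3 1 0 0), (mk3 0 1 0), (mk3 0 0 1).
  split; first by rewrite /nsq /dot !mk3E0 !mk3E1 !mk3E2; ring.
  split; first by rewrite /nsq /dot !mk3E0 !mk3E1 !mk3E2; ring.
  split; first by rewrite /nsq /dot !mk3E0 !mk3E1 !mk3E2; ring.
  split; first by move=> y; rewrite /nsq /dot !mk3E0 !mk3E1 !mk3E2; ring.
  by move=> w hw; exfalso; apply: hno; exists w.
have [v1 [hv1 hmax]] := max_vertex r0 hseg hout hv0.
set a := enorm (v1 - c) in hmax.
have ra : r < a.
  case: (leP a r) => // h; exfalso; apply: (hout v1 hv1); exact: h.
have ap : 0 < enorm (v1 - c) by rewrite -/a; lra.
set e1 := dir c v1.
have he1 : nsq e1 = 1 by apply: dir_unit.
have hsc : v1 - c = a *: e1 by apply: dir_scale.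
have hanti : forall u, V u -> enorm (u - c) = a -> V (2%:R *: c - u).
  move=> u hu hua; exact: (antipode r0 hseg hout hsym hmax hu hua).
have hv1' := hanti v1 hv1 erefl.
have [e2 [he2 [h12 hZ]]] : exists e2, nsq e2 = 1 /\ dot e1 e2 = 0 /\ Zprop c r a V e1 e2.
  case: (pselect (exists w0, V w0 /\ dot (w0 - c) e1 = 0 /\ nsq (w0 - c) = 2 * r ^+ 2)) =>
    [[w0 [hw0 [hw01 hw0n]]]|hno'].
    exists (dir c w0); exact: (Zlemma r0 hseg he1 hanti hw0 hw01 hw0n).
  have [f [hf1 [hf2 _]]] := perp_exists e1 e1.
  exists f; split => //; split => //.
  move=> w hw hx hn _ _; apply: hno'; by exists w.
exists e1, e2, (cross e1 e2); split => //; split => //; split; first exact: cross_unit.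
split; first by move=> y; apply: parseval.
move=> w hw; exact: (vertex_good r0 hseg ra hv1 hv1' hsc he1 he2 h12 hmax hZ hw).
Qed.

End Frame3.


Section Illum.
Variable R : realType.
Notation pt := 'rV[R]_3.

Lemma interiorP (K : set pt) (x : pt) :
  (exists2 e : R, 0 < e & forall y : pt, (forall i, `|y ord0 i - x ord0 i| < e) -> K y) -> interior K x.
Proof.
move=> [e e0 H]. rewrite /interior. apply/nbhs_ballP. exists e => // y /= [_ Hy].
apply: H => i. have := Hy ord0 i. rewrite /ball /= => h. by rewrite distrC.
Qed.

Lemma closureP (K : set pt) (p : pt) : closure K p ->
  forall e : R, 0 < e -> exists y : pt, K y /\ forall i, `|y ord0 i - p ord0 i| < e.
Proof.
move=> Hc e e0. have := Hc (ball p e). case.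
  by apply/nbhs_ballP; exists e.
move=> y [Ky [_ Hy]]. exists y; split => // i. have := Hy ord0 i. rewrite /ball /= => h. by rewrite distrC.
Qed.

Lemma box_enorm (y p : pt) (e : R) : (forall i, `|y ord0 i - p ord0 i| < e) -> enorm (y - p) < 3 * e.
Proof.
move=> h; apply: le_lt_trans (enorm_box _) _; rewrite !mxE.
have := h i0; have := h i1; have := h i2; lra.
Qed.

Lemma enorm_tri (x y z : pt) : enorm (x - z) <= enorm (x - y) + enorm (y - z).
Proof.
have -> : x - z = (x - y) + (y - z) by apply/rowP => i; rewrite !mxE; ring.
exact: enormD.
Qed.

Lemma illum_of_ball (c : pt) (r : R) (V : set pt) (u p : pt) (lam : R) : 0 < lam ->
  enorm (p + lam *: u - c) < r ->
  illuminates (conv_hull (eball c r `|` V)) u p.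
Proof.
move=> l0 h; exists lam; split => //.
apply: interiorP; set q := p + lam *: u in h *.
exists ((r - enorm (q - c)) / 3); first by apply: divr_gt0; lra.
move=> y hy; apply: conv_in; left; rewrite /eball /=.
have := box_enorm hy; have := enorm_tri y q c; lra.
Qed.

Definition D6 (e1 e2 e3 : pt) : seq pt := [:: e1; - e1; e2; - e2; e3; - e3].

Lemma D6_mem (e1 e2 e3 e : pt) : (e = e1 \/ e = e2 \/ e = e3) -> e \in D6 e1 e2 e3 /\ - e \in D6 e1 e2 e3.
Proof. by case=> [->|[->|->]]; rewrite !inE !eqxx ?orbT. Qed.

Lemma nsq_shift (y e : pt) (k : R) : nsq e = 1 -> k = dot y e -> nsq (y - k *: e) = nsq y - k ^+ 2.
Proof.
move=> he hk.
have -> : nsq (y - k *: e) = nsq y - 2 * k * dot y e + k ^+ 2 * nsq e.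
  rewrite /nsq /dot !mxE; ring.
rewrite he -hk; ring.
Qed.

Lemma dir_good (c p e1 e2 e3 e : pt) (r : R) : 0 < r -> (e = e1 \/ e = e2 \/ e = e3) -> nsq e = 1 ->
  dot (p - c) e != 0 -> nsq (p - c) - dot (p - c) e ^+ 2 < r ^+ 2 ->
  exists u, u \in D6 e1 e2 e3 /\ exists lam, 0 < lam /\ enorm (p + lam *: u - c) < r.
Proof.
move=> r0 he hn hk hlt.
have [m1 m2] := D6_mem he.
set k := dot (p - c) e in hk hlt.
have hs : nsq (p - c - k *: e) = nsq (p - c) - k ^+ 2 := nsq_shift hn erefl.
have hfin : enorm (p - c - k *: e) < r by apply/enorm_lt; [lra|rewrite hs].
case: (ltgtP k 0) => hk'.
- exists e; split => //; exists (- k); split; first lra.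
  have -> : p + - k *: e - c = p - c - k *: e by apply/rowP => i; rewrite !mxE; ring.
  done.
- exists (- e); split => //; exists k; split => //.
  have -> : p + k *: - e - c = p - c - k *: e by apply/rowP => i; rewrite !mxE; ring.
  done.
- by rewrite hk' eqxx in hk.
Qed.

End Illum.


Section Part1.
Variable R : realType.
Notation pt := 'rV[R]_3.

Lemma nsqN (e : pt) : nsq (- e) = nsq e.
Proof. rewrite /nsq /dot !mxE; ring. Qed.

Lemma sq_pos (k : R) : k != 0 -> 0 < k ^+ 2.
Proof. by move=> hk; rewrite lt_neqAle sqr_ge0 eq_sym sqrf_eq0 hk. Qed.

Lemma far_case (c : pt) (r : R) (V : set pt) (e1 e2 e3 p : pt) : 0 < r -> segc c r V -> outside c r V ->
  frameok c r V e1 e2 e3 -> closure (conv_hull (eball c r `|` V)) p -> r < enorm (p - c) ->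
  exists2 u, u \in D6 e1 e2 e3 & illuminates (conv_hull (eball c r `|` V)) u p.
Proof.
move=> r0 hseg hout [h1 [h2 [h3 [hP hV]]]] hcl hdp.
set dp := enorm (p - c) in hdp.
set eta := (dp - r) / 2.
have eta0 : 0 < eta by rewrite /eta; lra.
have [s hs] := finite_far (rho := r + eta) r0 ltac:(lra) hseg hout.
have near : forall eps : R, 0 < eps -> eps <= eta -> forall y, enorm (y - p) < eps -> r + eta < enorm (y - c).
  move=> eps e0 e1' y hy.
  have := enorm_tri p y c; rewrite (enormB p y) -/dp; rewrite /eta in e1' *; lra.
have happ : forall eps : R, 0 < eps -> exists y, enorm (y - p) < eps /\
    exists v, v \in s /\ (V v /\ capf c r v y).
  move=> eps e0.
  set e' := Num.min eps eta.
  have e'0 : 0 < e' by rewrite lt_min e0 eta0.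
  have e'1 : e' <= eps by rewrite /e' ge_min lexx.
  have e'2 : e' <= eta by rewrite /e' ge_min lexx orbT.
  have [y [hy hyp]] := closureP hcl (e := e' / 3) ltac:(apply: divr_gt0; lra).
  have hyp' : enorm (y - p) < e' by have := box_enorm hyp; lra.
  have hyc := near _ e'0 e'2 _ hyp'.
  have [a [v [b [ha [hv [hb E]]]]]] := conv_struct (ltW r0) hseg hy.
  case: hv => [a0|hv].
    exfalso; move: hb; rewrite /eball /=.
    have -> : b = y by rewrite E a0 scale0r add0r subr0 scale1r.
    lra.
  exists y; split; first lra.
  exists v; split; last by split => //; exists a, b.
  apply: hs => //.
  have := cap_norm v ha hb; rewrite -E => hc.
  case: (leP (r + eta) (enorm (v - c))) => // hlt; exfalso.
  move: ha => /andP[a0 a1].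
  have : a * enorm (v - c) <= a * (r + eta) by apply: ler_wpM2l => //; lra.
  nra.
have [v [hvs hQ]] := swap happ.
have [y0 [_ [hv _]]] := hQ 1 ltr01.
have [e [he hlt]] := hV v hv.
have hen : nsq e = 1 by case: he => [->|[->|->]].
have hk : dot (v - c) e != 0.
  apply/eqP => hk0; apply: (hout v hv); rewrite /eball /=; apply/enorm_le; first lra.
  move: hlt; rewrite hk0; lra.
have [u [hu [mu [mu0 hmu]]]] := dir_good (p := v) r0 he hen hk hlt.
set del := r - enorm (v + mu *: u - c).
have del0 : 0 < del by rewrite /del; lra.
set dv := enorm (v - c).
have hdv : r < dv.
  case: (leP dv r) => // h; exfalso; exact: (hout v hv).
set ka := eta / (dv - r).
have ka0 : 0 < ka by rewrite /ka divr_gt0 //; lra.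
set eps := Num.min eta (ka * del).
have eps0 : 0 < eps by rewrite lt_min eta0 mulr_gt0.
have eps1 : eps <= eta by rewrite /eps ge_min lexx.
have eps2 : eps <= ka * del by rewrite /eps ge_min lexx orbT.
have [y [hy [_ [al [b [hal [hb E]]]]]]] := hQ _ eps0.
have hyc := near _ eps0 eps1 _ hy.
move: (hal) => /andP[al0 al1].
have hcy := cap_norm v hal hb; rewrite -E -/dv in hcy.
have halk : ka < al.
  rewrite /ka ltr_pdivrMr; last lra.
  nra.
have halp : 0 < al by lra.
exists u => //.
apply: (@illum_of_ball _ c r V u p (al * mu)); first exact: mulr_gt0.
have Ey : y + (al * mu) *: u = al *: (v + mu *: u) + (1 - al) *: b.
  rewrite E; apply/rowP => i; rewrite !mxE; ring.
have hb2 := cap_norm (v + mu *: u) hal hb; rewrite -Ey in hb2.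
have := enorm_tri (p + (al * mu) *: u) (y + (al * mu) *: u) c.
have -> : p + (al * mu) *: u - (y + (al * mu) *: u) = - (y - p) by apply/rowP => i; rewrite !mxE; ring.
have -> : enorm (- (y - p)) = enorm (y - p) by rewrite -scaleN1r enormZ normrN normr1 mul1r.
have : al * enorm (v + mu *: u - c) = al * r - al * del by rewrite /del; ring.
nra.
Qed.

End Part1.


Section Part1b.
Variable R : realType.
Notation pt := 'rV[R]_3.

Lemma ball_case (c : pt) (r : R) (V : set pt) (e1 e2 e3 p : pt) : 0 < r ->
  frameok c r V e1 e2 e3 -> enorm (p - c) <= r ->
  exists2 u, u \in D6 e1 e2 e3 & illuminates (conv_hull (eball c r `|` V)) u p.
Proof.
move=> r0 [h1 [h2 [h3 [hP hV]]]] hp.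
have hp2 : nsq (p - c) <= r ^+ 2 by apply/enorm_le => //; lra.
have fin : forall e, (e = e1 \/ e = e2 \/ e = e3) -> nsq e = 1 -> dot (p - c) e != 0 ->
    exists2 u, u \in D6 e1 e2 e3 & illuminates (conv_hull (eball c r `|` V)) u p.
  move=> e he hn hk.
  have [u [hu [lam [l0 hl]]]] := dir_good r0 he hn hk ltac:(have := sq_pos hk; lra).
  exists u => //; exact: (@illum_of_ball _ c r V u p lam l0 hl).
case: (eqVneq (dot (p - c) e1) 0) => [d1|d1]; last by apply: (fin e1) => //; left.
case: (eqVneq (dot (p - c) e2) 0) => [d2|d2]; last by apply: (fin e2) => //; right; left.
case: (eqVneq (dot (p - c) e3) 0) => [d3|d3]; last by apply: (fin e3) => //; right; right.
have pc : p - c = 0 by apply: nsq0; rewrite hP d1 d2 d3; ring.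
exists e1; first by rewrite !inE eqxx.
apply: (@illum_of_ball _ c r V e1 p (r / 2)); first by apply: divr_gt0.
have -> : p + (r / 2) *: e1 - c = (r / 2) *: e1.
  apply/rowP => i; move/rowP: pc => /(_ i); rewrite !mxE => pc; lra.
have hr2 : 0 <= r / 2 by apply: divr_ge0; lra.
rewrite enormZ (enorm_unit h1) mulr1 ger0_norm //; lra.
Qed.

Lemma part1 (K : set pt) : is_cap_body_of_ball K -> centrally_symmetric K ->
  illumination_number_le K 6.
Proof.
move=> [c [r [V [r0 HH]]]] [oo ho]; move: HH => [_ [hVB [hseg HK]]]; subst K.
have hout : outside c r V.
  move=> v hv hb; have : (V `&` eball c r) v by [].
  by rewrite hVB.
have hsym0 : forall x, conv_hull (eball c r `|` V) x -> conv_hull (eball c r `|` V) (2%:R *: oo - x).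
  by move=> x hx; exact: ((ho x).1 hx).
have hc := center r0 hseg hout hsym0.
have hsym : forall x, conv_hull (eball c r `|` V) x -> conv_hull (eball c r `|` V) (2%:R *: c - x).
  move=> x hx; have := hsym0 x hx.
  suff -> : 2%:R *: oo = 2%:R *: c by [].
  rewrite hc; apply/rowP => i; rewrite !mxE; ring.
have [e1 [e2 [e3 hF]]] := frame_exists r0 hseg hout hsym.
have hF' := hF; move: hF' => [h1 [h2 [h3 [hP hV]]]].
exists (D6 e1 e2 e3); split; first by [].
split.
  move=> u; rewrite !inE => /orP[/eqP->|/orP[/eqP->|/orP[/eqP->|/orP[/eqP->|/orP[/eqP->|/eqP->]]]]];
  apply: enorm_unit; by rewrite ?nsqN.
move=> p [hcl _].
case: (leP (enorm (p - c)) r) => hp.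
  exact: ball_case r0 hF hp.
exact: far_case r0 hseg hout hF hcl hp.
Qed.

End Part1b.


Section Example.
Variable R : realType.
Notation pt := 'rV[R]_3.

Definition s2 : R := Num.sqrt 2.
Lemma s2_sq : s2 ^+ 2 = 2. Proof. by rewrite /s2 sqr_sqrtr // ler0n. Qed.
Lemma s2_pos : 0 < s2. Proof. by rewrite /s2 sqrtr_gt0 ltr0n. Qed.

Definition verts : seq pt :=
  [:: mk3 s2 0 0; mk3 (- s2) 0 0; mk3 0 s2 0; mk3 0 (- s2) 0; mk3 0 0 s2; mk3 0 0 (- s2)].
Definition Vx : set pt := [set` verts].
Definition Kx : set pt := conv_hull (eball 0 1 `|` Vx).

Lemma verts_cases (x : pt) : Vx x ->
  x = mk3 s2 0 0 \/ x = mk3 (- s2) 0 0 \/ x = mk3 0 s2 0 \/ x = mk3 0 (- s2) 0 \/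
  x = mk3 0 0 s2 \/ x = mk3 0 0 (- s2).
Proof.
rewrite /Vx /= !inE.
move=> /orP[/eqP->|/orP[/eqP->|/orP[/eqP->|/orP[/eqP->|/orP[/eqP->|/eqP->]]]]]; tauto.
Qed.

Ltac crd := rewrite /nsq /dot ?mk3E0 ?mk3E1 ?mk3E2.

Lemma verts_nsq (x : pt) : Vx x -> nsq x = 2.
Proof.
have := s2_sq => hs.
case/verts_cases => [->|[->|[->|[->|[->|->]]]]]; crd; rewrite -hs; ring.
Qed.

Lemma verts_dot (x y : pt) : Vx x -> Vx y -> x <> y -> dot x y <= 0.
Proof.
have := s2_sq => hs; have := s2_pos => hp.
case/verts_cases => [->|[->|[->|[->|[->|->]]]]];
case/verts_cases => [->|[->|[->|[->|[->|->]]]]] => // _; crd; nra.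
Qed.

Lemma verts_neg (x : pt) : Vx x -> Vx (- x).
Proof.
have E : forall a b c : R, - mk3 a b c = mk3 (- a) (- b) (- c).
  by move=> a b c; apply: vec3_ext; rewrite [LHS]mxE ?mk3E0 ?mk3E1 ?mk3E2.
case/verts_cases => [->|[->|[->|[->|[->|->]]]]]; rewrite E ?opprK ?oppr0; rewrite /Vx /= !inE eqxx ?orbT //.
Qed.

Lemma ex_outside : outside 0 1 Vx.
Proof.
move=> x hx; rewrite /eball /= subr0 => /(enorm_le _ ler01).
rewrite verts_nsq //; lra.
Qed.

Lemma ex_segc : segc 0 1 Vx.
Proof.
move=> v w hv hw vw.
exists ((1 - 1 / 2) *: v + (1 / 2) *: w); split; first by exists (1 / 2); split => //; apply/andP; split; lra.
rewrite /eball /= subr0; apply/enorm_le; first lra.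
have -> : nsq ((1 - 1 / 2) *: v + (1 / 2) *: w) = (nsq v + 2 * dot v w + nsq w) / 4.
  by rewrite /nsq /dot !mxE; field.
rewrite (verts_nsq hv) (verts_nsq hw); have := verts_dot hv hw vw; lra.
Qed.

Lemma ex_cap : is_cap_body_of_ball Kx.
Proof.
exists 0, 1, Vx; split; first lra.
split; first by apply: finite_set_countable; apply: finite_seq.
split.
  apply/seteqP; split => [x [hx hb]|x []] //.
  exact: (ex_outside hx hb).
split; first exact: ex_segc.
by [].
Qed.

Lemma Kx_neg (x : pt) : Kx x -> Kx (- x).
Proof.
move=> [n [w [p [hw [hs [hp ->]]]]]].
exists n, w, (fun i => - p i); split => //; split => //; split.
  move=> i; case: (hp i) => h; [left|right].
    by move: h; rewrite /eball /= !subr0 -scaleN1r enormZ normrN normr1 mul1r.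
  exact: verts_neg.
by rewrite -sumrN; apply: eq_bigr => i _; rewrite scalerN.
Qed.

Lemma ex_sym : centrally_symmetric Kx.
Proof.
exists 0 => x; rewrite scaler0 sub0r; split; first exact: Kx_neg.
by move/Kx_neg; rewrite opprK.
Qed.

End Example.


Section Lower.
Variable R : realType.
Notation pt := 'rV[R]_3.
Local Notation s2 := (@s2 R).
Local Notation Kx := (@Kx R).
Local Notation Vx := (@Vx R).

Lemma interior_box (K : set pt) (z : pt) : interior K z ->
  exists2 e : R, 0 < e & forall y : pt, (forall i, `|y ord0 i - z ord0 i| < e) -> K y.
Proof.
rewrite /interior => /nbhs_ballP [e e0 he].
exists e => // y hy; apply: he; split => // i j.
rewrite (ord1 i) /ball /= distrC; exact: hy.
Qed.

Lemma half_ex (n x : pt) : nsq n = 2 -> (forall i, -1 <= n ord0 i <= 1) -> Kx x -> dot x n <= s2.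
Proof.
move=> hn hb hx.
have [a [v [b [/andP[a0 a1] [hv [hbl E]]]]]] := conv_struct ler01 (@ex_segc R) hx.
have hbd : dot b n <= s2.
  apply: le_trans (dot_le _ _) _.
  have -> : enorm n = s2 by rewrite enormE hn.
  move: hbl; rewrite /eball /= subr0 => hbl.
  have h := ler_wpM2r (ltW (@s2_pos R)) hbl; by rewrite mul1r in h.
have -> : dot x n = a * dot v n + (1 - a) * dot b n by rewrite E /dot !mxE; ring.
case: hv => [->|hv]; first by lra.
have hvd : dot v n <= s2.
  have hp := @s2_pos R.
  have /andP[h0 h0'] := hb i0; have /andP[h1 h1'] := hb i1; have /andP[h2 h2'] := hb i2.
  case/verts_cases: hv => [->|[->|[->|[->|[->|->]]]]]; rewrite /dot ?mk3E0 ?mk3E1 ?mk3E2; nra.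
have : a * dot v n <= a * s2 by apply: ler_wpM2l.
have : (1 - a) * dot b n <= (1 - a) * s2 by apply: ler_wpM2l => //; lra.
lra.
Qed.

Lemma strict_ex (n z : pt) : nsq n = 2 -> (forall i, -1 <= n ord0 i <= 1) -> interior Kx z -> dot z n < s2.
Proof.
move=> hn hb /interior_box [e e0 he].
have hy : Kx (z + (e / 2) *: n).
  apply: he => i; rewrite !mxE.
  have -> : z ord0 i + e / 2 * n ord0 i - z ord0 i = e / 2 * n ord0 i by ring.
  rewrite normrM ger0_norm; last by apply: divr_ge0; lra.
  have : `|n ord0 i| <= 1 by rewrite ler_norml.
  nra.
have := half_ex hn hb hy.
have -> : dot (z + (e / 2) *: n) n = dot z n + e / 2 * nsq n by rewrite /nsq /dot !mxE; ring.
rewrite hn; lra.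
Qed.

Lemma vcond (P u : pt) (a b c : R) : Vx P -> a ^+ 2 + b ^+ 2 + c ^+ 2 = 2 ->
  -1 <= a <= 1 -> -1 <= b <= 1 -> -1 <= c <= 1 -> dot P (mk3 a b c) = s2 ->
  illuminates Kx u P -> dot u (mk3 a b c) < 0.
Proof.
move=> hP hn ha hb hc hd [lam [l0 hint]].
have hn' : nsq (mk3 a b c) = 2 by rewrite /nsq /dot !mk3E0 !mk3E1 !mk3E2 -hn; ring.
have hb' : forall i, -1 <= mk3 a b c ord0 i <= 1.
  by move=> i; case: (ord3 i) => [->|[->|->]]; rewrite ?mk3E0 ?mk3E1 ?mk3E2.
have := strict_ex hn' hb' hint.
have -> : dot (P + lam *: u) (mk3 a b c) = dot P (mk3 a b c) + lam * dot u (mk3 a b c).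
  by rewrite /dot !mxE; ring.
rewrite hd => h.
have : lam * dot u (mk3 a b c) < 0 by lra.
by rewrite pmulr_rlt0.
Qed.

Lemma vbound (P : pt) (a b c : R) : Vx P -> a ^+ 2 + b ^+ 2 + c ^+ 2 = 2 ->
  -1 <= a <= 1 -> -1 <= b <= 1 -> -1 <= c <= 1 -> dot P (mk3 a b c) = s2 ->
  boundary Kx P.
Proof.
move=> hP hn ha hb hc hd; split.
  by apply: subset_closure; apply: conv_in; right.
move=> hint.
have hn' : nsq (mk3 a b c) = 2 by rewrite /nsq /dot !mk3E0 !mk3E1 !mk3E2 -hn; ring.
have hb' : forall i, -1 <= mk3 a b c ord0 i <= 1.
  by move=> i; case: (ord3 i) => [->|[->|->]]; rewrite ?mk3E0 ?mk3E1 ?mk3E2.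
have := strict_ex hn' hb' hint; rewrite hd; lra.
Qed.

End Lower.


Section Final.
Variable R : realType.
Notation pt := 'rV[R]_3.
Local Notation s2 := (@s2 R).
Local Notation Kx := (@Kx R).
Local Notation Vx := (@Vx R).

Lemma b11 : -1 <= (1 : R) <= 1. Proof. apply/andP; split; lra. Qed.
Lemma b00 : -1 <= (0 : R) <= 1. Proof. apply/andP; split; lra. Qed.
Lemma bm1 : -1 <= (-1 : R) <= 1. Proof. apply/andP; split; lra. Qed.

Lemma lower (m : nat) : illumination_number_le Kx m -> (6 <= m)%N.
Proof.
move=> [D [hsz [_ hill]]].
have V0 : Vx (mk3 s2 0 0) by rewrite /Vx /= !inE eqxx ?orbT.
have [u0 hu0 il0] := hill _ (vbound (a := 1) (b := 1) (c := 0) V0 ltac:(ring) b11 b11 b00 ltac:(rewrite /dot !mk3E0 !mk3E1 !mk3E2; ring)).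
have c0_0 := vcond (a := 1) (b := 1) (c := 0) V0 ltac:(ring) b11 b11 b00 ltac:(rewrite /dot !mk3E0 !mk3E1 !mk3E2; ring) il0.
rewrite /dot !mk3E0 !mk3E1 !mk3E2 in c0_0.
have c0_1 := vcond (a := 1) (b := -1) (c := 0) V0 ltac:(ring) b11 bm1 b00 ltac:(rewrite /dot !mk3E0 !mk3E1 !mk3E2; ring) il0.
rewrite /dot !mk3E0 !mk3E1 !mk3E2 in c0_1.
have c0_2 := vcond (a := 1) (b := 0) (c := 1) V0 ltac:(ring) b11 b00 b11 ltac:(rewrite /dot !mk3E0 !mk3E1 !mk3E2; ring) il0.
rewrite /dot !mk3E0 !mk3E1 !mk3E2 in c0_2.
have c0_3 := vcond (a := 1) (b := 0) (c := -1) V0 ltac:(ring) b11 b00 bm1 ltac:(rewrite /dot !mk3E0 !mk3E1 !mk3E2; ring) il0.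
rewrite /dot !mk3E0 !mk3E1 !mk3E2 in c0_3.
have V1 : Vx (mk3 (- s2) 0 0) by rewrite /Vx /= !inE eqxx ?orbT.
have [u1 hu1 il1] := hill _ (vbound (a := -1) (b := 1) (c := 0) V1 ltac:(ring) bm1 b11 b00 ltac:(rewrite /dot !mk3E0 !mk3E1 !mk3E2; ring)).
have c1_0 := vcond (a := -1) (b := 1) (c := 0) V1 ltac:(ring) bm1 b11 b00 ltac:(rewrite /dot !mk3E0 !mk3E1 !mk3E2; ring) il1.
rewrite /dot !mk3E0 !mk3E1 !mk3E2 in c1_0.
have c1_1 := vcond (a := -1) (b := -1) (c := 0) V1 ltac:(ring) bm1 bm1 b00 ltac:(rewrite /dot !mk3E0 !mk3E1 !mk3E2; ring) il1.
rewrite /dot !mk3E0 !mk3E1 !mk3E2 in c1_1.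
have c1_2 := vcond (a := -1) (b := 0) (c := 1) V1 ltac:(ring) bm1 b00 b11 ltac:(rewrite /dot !mk3E0 !mk3E1 !mk3E2; ring) il1.
rewrite /dot !mk3E0 !mk3E1 !mk3E2 in c1_2.
have c1_3 := vcond (a := -1) (b := 0) (c := -1) V1 ltac:(ring) bm1 b00 bm1 ltac:(rewrite /dot !mk3E0 !mk3E1 !mk3E2; ring) il1.
rewrite /dot !mk3E0 !mk3E1 !mk3E2 in c1_3.
have V2 : Vx (mk3 0 s2 0) by rewrite /Vx /= !inE eqxx ?orbT.
have [u2 hu2 il2] := hill _ (vbound (a := 1) (b := 1) (c := 0) V2 ltac:(ring) b11 b11 b00 ltac:(rewrite /dot !mk3E0 !mk3E1 !mk3E2; ring)).
have c2_0 := vcond (a := 1) (b := 1) (c := 0) V2 ltac:(ring) b11 b11 b00 ltac:(rewrite /dot !mk3E0 !mk3E1 !mk3E2; ring) il2.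
rewrite /dot !mk3E0 !mk3E1 !mk3E2 in c2_0.
have c2_1 := vcond (a := -1) (b := 1) (c := 0) V2 ltac:(ring) bm1 b11 b00 ltac:(rewrite /dot !mk3E0 !mk3E1 !mk3E2; ring) il2.
rewrite /dot !mk3E0 !mk3E1 !mk3E2 in c2_1.
have c2_2 := vcond (a := 0) (b := 1) (c := 1) V2 ltac:(ring) b00 b11 b11 ltac:(rewrite /dot !mk3E0 !mk3E1 !mk3E2; ring) il2.
rewrite /dot !mk3E0 !mk3E1 !mk3E2 in c2_2.
have c2_3 := vcond (a := 0) (b := 1) (c := -1) V2 ltac:(ring) b00 b11 bm1 ltac:(rewrite /dot !mk3E0 !mk3E1 !mk3E2; ring) il2.
rewrite /dot !mk3E0 !mk3E1 !mk3E2 in c2_3.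
have V3 : Vx (mk3 0 (- s2) 0) by rewrite /Vx /= !inE eqxx ?orbT.
have [u3 hu3 il3] := hill _ (vbound (a := 1) (b := -1) (c := 0) V3 ltac:(ring) b11 bm1 b00 ltac:(rewrite /dot !mk3E0 !mk3E1 !mk3E2; ring)).
have c3_0 := vcond (a := 1) (b := -1) (c := 0) V3 ltac:(ring) b11 bm1 b00 ltac:(rewrite /dot !mk3E0 !mk3E1 !mk3E2; ring) il3.
rewrite /dot !mk3E0 !mk3E1 !mk3E2 in c3_0.
have c3_1 := vcond (a := -1) (b := -1) (c := 0) V3 ltac:(ring) bm1 bm1 b00 ltac:(rewrite /dot !mk3E0 !mk3E1 !mk3E2; ring) il3.
rewrite /dot !mk3E0 !mk3E1 !mk3E2 in c3_1.
have c3_2 := vcond (a := 0) (b := -1) (c := 1) V3 ltac:(ring) b00 bm1 b11 ltac:(rewrite /dot !mk3E0 !mk3E1 !mk3E2; ring) il3.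
rewrite /dot !mk3E0 !mk3E1 !mk3E2 in c3_2.
have c3_3 := vcond (a := 0) (b := -1) (c := -1) V3 ltac:(ring) b00 bm1 bm1 ltac:(rewrite /dot !mk3E0 !mk3E1 !mk3E2; ring) il3.
rewrite /dot !mk3E0 !mk3E1 !mk3E2 in c3_3.
have V4 : Vx (mk3 0 0 s2) by rewrite /Vx /= !inE eqxx ?orbT.
have [u4 hu4 il4] := hill _ (vbound (a := 1) (b := 0) (c := 1) V4 ltac:(ring) b11 b00 b11 ltac:(rewrite /dot !mk3E0 !mk3E1 !mk3E2; ring)).
have c4_0 := vcond (a := 1) (b := 0) (c := 1) V4 ltac:(ring) b11 b00 b11 ltac:(rewrite /dot !mk3E0 !mk3E1 !mk3E2; ring) il4.
rewrite /dot !mk3E0 !mk3E1 !mk3E2 in c4_0.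
have c4_1 := vcond (a := -1) (b := 0) (c := 1) V4 ltac:(ring) bm1 b00 b11 ltac:(rewrite /dot !mk3E0 !mk3E1 !mk3E2; ring) il4.
rewrite /dot !mk3E0 !mk3E1 !mk3E2 in c4_1.
have c4_2 := vcond (a := 0) (b := 1) (c := 1) V4 ltac:(ring) b00 b11 b11 ltac:(rewrite /dot !mk3E0 !mk3E1 !mk3E2; ring) il4.
rewrite /dot !mk3E0 !mk3E1 !mk3E2 in c4_2.
have c4_3 := vcond (a := 0) (b := -1) (c := 1) V4 ltac:(ring) b00 bm1 b11 ltac:(rewrite /dot !mk3E0 !mk3E1 !mk3E2; ring) il4.
rewrite /dot !mk3E0 !mk3E1 !mk3E2 in c4_3.
have V5 : Vx (mk3 0 0 (- s2)) by rewrite /Vx /= !inE eqxx ?orbT.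
have [u5 hu5 il5] := hill _ (vbound (a := 1) (b := 0) (c := -1) V5 ltac:(ring) b11 b00 bm1 ltac:(rewrite /dot !mk3E0 !mk3E1 !mk3E2; ring)).
have c5_0 := vcond (a := 1) (b := 0) (c := -1) V5 ltac:(ring) b11 b00 bm1 ltac:(rewrite /dot !mk3E0 !mk3E1 !mk3E2; ring) il5.
rewrite /dot !mk3E0 !mk3E1 !mk3E2 in c5_0.
have c5_1 := vcond (a := -1) (b := 0) (c := -1) V5 ltac:(ring) bm1 b00 bm1 ltac:(rewrite /dot !mk3E0 !mk3E1 !mk3E2; ring) il5.
rewrite /dot !mk3E0 !mk3E1 !mk3E2 in c5_1.
have c5_2 := vcond (a := 0) (b := 1) (c := -1) V5 ltac:(ring) b00 b11 bm1 ltac:(rewrite /dot !mk3E0 !mk3E1 !mk3E2; ring) il5.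
rewrite /dot !mk3E0 !mk3E1 !mk3E2 in c5_2.
have c5_3 := vcond (a := 0) (b := -1) (c := -1) V5 ltac:(ring) b00 bm1 bm1 ltac:(rewrite /dot !mk3E0 !mk3E1 !mk3E2; ring) il5.
rewrite /dot !mk3E0 !mk3E1 !mk3E2 in c5_3.
have hu : uniq [:: u0; u1; u2; u3; u4; u5].
  rewrite /= !inE !negb_or; repeat (apply/andP; split) => //; apply/eqP => E; subst; lra.
have := uniq_leq_size hu (s2 := D).
have hsub : {subset [:: u0; u1; u2; u3; u4; u5] <= D}.
  by move=> x; rewrite !inE => /orP[/eqP->|/orP[/eqP->|/orP[/eqP->|/orP[/eqP->|/orP[/eqP->|/eqP->]]]]].
move/(_ hsub) => /= h6.
exact: leq_trans h6 hsz.
Qed.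

End Final.


Theorem theorem2 (R : realType) :
  (forall K : set 'rV[R]_3,
      is_cap_body_of_ball K -> centrally_symmetric K ->
      illumination_number_le K 6) /\
  (exists K : set 'rV[R]_3,
      is_cap_body_of_ball K /\ centrally_symmetric K /\
      illumination_number_eq K 6).
Proof.
split; first by move=> K; apply: part1.
exists (@Kx R); split; first exact: ex_cap.
split; first exact: ex_sym.
split; first exact: part1 (@ex_cap R) (@ex_sym R).
exact: lower.
Qed.
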